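(* $\displaystyle\min_{\underline y\in\mathcal F}\sum_{j\in\tilde R}c_jy_j=\min_{\underline x\in\mathcal F_0}\sum_{j\in\tilde R}c_jx_j$. That is, the optimum value of the node-cut integer linear program equals the optimum cost of the multi-sink relay placement problem with hop bound $h_{\max}$.
   Context: Let $G=(V,E)$ be a finite undirected graph with $V=Q\cup R\cup B$ (pairwise disjoint), where $Q$ is the set of sources, $R$ the set of potential relay locations and $B$ the set of potential sink locations; let $h_{\max}$ be a positive integer and $c_s,c_r\ge0$. Form the augmented graph $\tilde G=(\tilde V,\tilde E)$ with $\tilde V=V\cup\{0\}$, where $0$ is a new vertex (virtual sink), and $\tilde E=E\cup\{\{0,b\}:b\in B\}$. Let $\tilde R=R\cup B$ with node costs $c_j=c_r$ for $j\in R$ and $c_j=c_s$ for $j\in B$. For a source $k\in Q$, a node cut for $k$ is a set $\gamma\subseteq\tilde V\setminus\{k,0\}$ whose deletion disconnects $k$ from $0$ in $\tilde G$; it is minimal if no proper subset is a node cut; $\Gamma^k$ denotes the set of minimal node cuts for $k$. A vector $\underline y=((y_{j,k})_{k\in Q,\,j\in\tilde V\setminus\{k,0\}},(y_j)_{j\in\tilde R})$ belongs to $\mathcal F$ (the feasible set of the ILP minimizing $\sum_{j\in\tilde R}c_jy_j$) iff: (i) $\sum_{j\in\gamma}y_{j,k}\ge1$ for all $\gamma\in\Gamma^k$, $k\in Q$; (ii) $y_j\ge y_{j,k}$ for all $j\in\tilde R$, $k\in Q$; (iii) $\sum_{j\in\tilde V\setminus\{k,0\}}y_{j,k}\le h_{\max}$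 for all $k\in Q$; (iv) all $y_{j,k},y_j\in\{0,1\}$. For $k\in Q$ let $\mathcal P'_k$ be the set of paths in $\tilde G$ from $k$ to $0$ with at most $h_{\max}+1$ edges, and let $\mathcal U_0$ be the set of tuples $\underline g=(p_k)_{k\in Q}$ with $p_k\in\mathcal P'_k$. For $\underline g\in\mathcal U_0$ define $\underline x(\underline g)$ by $x_{j,k}=1$ if $j$ is a vertex of $p_k$ and $0$ otherwise ($k\in Q$, $j\in\tilde V\setminus\{k,0\}$), and $x_j=1$ if $x_{j,k}=1$ for some $k\in Q$ and $0$ otherwise ($j\in\tilde R$). Let $\mathcal F_0=\{\underline x(\underline g):\underline g\in\mathcal U_0\}$; the minimum cost over $\mathcal F_0$ is the optimum cost of selecting sinks (cost $c_s$ each) and relays (cost $c_r$ each) so that every source has a path of at most $h_{\max}$ hops to a selected sink. A minimum over an empty set is taken to be $+\infty$. *)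

(* Defs.v *)
From HB Require Import structures.
From mathcomp Require Import all_boot all_order all_algebra.
Set Implicit Arguments. Unset Strict Implicit. Unset Printing Implicit Defensive.
Import Order.TTheory GRing.Theory Num.Theory.

Section Defs.
Variable V : finType.
(* undirected graph G = (V, e); Q sources, R relay locations, B sink locations *)
Variables (e : rel V) (Q R B : {set V}).

(* Augmented graph on option V: None is the virtual sink 0,
   with the extra edges {0,b} for b in B. *)
Definition aug_edge : rel (option V) := fun x y =>
  match x, y with
  | Some u, Some v => e u v
  | Some b, None => b \in B
  | None, Some b => b \in B
  | None, None => false
  end.

Definition Rt : {set V} := R :|: B.

(* gamma (a subset of Vt \ {k,0}, i.e. of V, not containing k) is a node cut for k:
   deleting gamma disconnects Some k from None in the augmented graph. *)
Definition is_node_cut (k : V) (gamma : {set V}) : bool :=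
  (k \notin gamma) &&
  ~~ connect [rel x y | [&& aug_edge x y, oapp (fun u => u \notin gamma) true x
                                       & oapp (fun u => u \notin gamma) true y]]
       (Some k) None.

Definition is_min_node_cut (k : V) (gamma : {set V}) : Prop :=
  is_node_cut k gamma /\ forall g' : {set V}, g' \proper gamma -> ~~ is_node_cut k g'.

(* A vector y = ((y_{j,k}), (y_j)) represented by two boolean functions:
   fst y k j = y_{j,k}, snd y j = y_j.  Entries outside the index set
   (k notin Q, or j = k; j notin Rt) are required to be 0. *)
Definition vec := ((V -> V -> bool) * (V -> bool))%type.

Definition supported (y : vec) : Prop :=
  (forall k j, y.1 k j -> (k \in Q) && (j != k)) /\
  (forall j, y.2 j -> j \in Rt).

Variable RR : realFieldType.
Variables (c_s c_r : RR) (hmax : nat).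

Definition cost_of (j : V) : RR := if j \in B then c_s else c_r.

Definition cost (y : vec) : RR := (\sum_(j in Rt) cost_of j * (y.2 j)%:R)%R.

Definition inF (y : vec) : Prop :=
  supported y /\
  (forall k, k \in Q -> forall gamma, is_min_node_cut k gamma ->
      (\sum_(j in gamma) (y.1 k j : nat) >= 1)%N) /\
  (forall j, j \in Rt -> forall k, k \in Q -> (y.1 k j <= y.2 j)%N) /\
  (forall k, k \in Q -> (\sum_(j | j != k) (y.1 k j : nat) <= hmax)%N).

(* Simple paths in the augmented graph from k to 0 with at most hmax+1 edges:
   vertex sequence Some k :: p, where size p is the number of edges. *)
Definition in_P' (k : V) (p : seq (option V)) : bool :=
  [&& path aug_edge (Some k) p, last (Some k) p == None,
      uniq (Some k :: p) & size p <= hmax.+1].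

(* x(g) for g = (p_k)_{k in Q}, represented as g : V -> seq (option V) *)
Definition xk (g : V -> seq (option V)) (k j : V) : bool :=
  [&& k \in Q, j != k & Some j \in g k].
Definition xj (g : V -> seq (option V)) (j : V) : bool :=
  (j \in Rt) && [exists k in Q, xk g k j].

Definition inF0 (x : vec) : Prop :=
  exists g : V -> seq (option V),
    (forall k, k \in Q -> in_P' k (g k)) /\
    (forall k j, x.1 k j = xk g k j) /\ (forall j, x.2 j = xj g j).

End Defs.

Definition is_min (T : Type) (RR : realFieldType) (P : T -> Prop) (f : T -> RR) (v : RR) :=
  (exists y, P y /\ f y = v) /\ (forall y, P y -> (v <= f y)%R).

(* Main.v *)
Require Import Defs.
From mathcomp Require Import all_boot all_order all_algebra.
Set Implicit Arguments. Unset Strict Implicit. Unset Printing Implicit Defensive.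
Import Order.TTheory GRing.Theory Num.Theory.

Lemma sum_bool_card (T : finType) (P b : pred T) :
  (forall j, b j -> P j) -> (\sum_(j | P j) (b j : nat) = #|[set j | b j]|)%N.
Proof.
move=> H; rewrite (bigID b) /= [X in (_ + X)%N]big1 ?addn0; last first.
  by move=> j /andP[_ /negbTE ->].
rewrite -sum1_card; apply: eq_big => [j|j /andP[_ ->] //].
rewrite inE; case: (boolP (b j)) => bj; rewrite ?andbT ?andbF //; exact: H.
Qed.

Lemma path_all_r (T : Type) (r : rel T) (P : pred T) x p :
  (forall a b, r a b -> P b) -> path r x p -> all P p.
Proof.
move=> H; elim: p x => //= a p IH x /andP[ra pa]; rewrite (H _ _ ra) /=; exact: IH pa.
Qed.

Lemma path_restr (T : Type) (r : rel T) (P : pred T) x p :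
  P x -> all P p -> path r x p -> path [rel a b | [&& r a b, P a & P b]] x p.
Proof.
elim: p x => //= a p IH x Px /andP[Pa Pp] /andP[ra pa].
by rewrite ra Px Pa /=; apply: IH.
Qed.

Lemma none_in (V : finType) (e : rel V) B hmax k p :
  in_P' e B hmax k p -> None \in p.
Proof.
case/and4P=> _ /eqP hl _ _; have := mem_last (Some k) p.
by rewrite hl inE.
Qed.

Lemma card_le (V : finType) (A : {set V}) (p : seq (option V)) :
  uniq (None :: map Some (enum A)) -> {subset None :: map Some (enum A) <= p} ->
  (#|A|.+1 <= size p)%N.
Proof.
move=> u s; have := uniq_leq_size u s; by rewrite /= size_map cardE.
Qed.

Lemma uniq_NS (V : finType) (A : {set V}) : uniq (None :: map Some (enum A)).
Proof.
rewrite /= (map_inj_uniq (@Some_inj _)) enum_uniq andbT.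
by apply/mapP => -[].
Qed.

Lemma F0_F (V : finType) (e : rel V) (Q R B : {set V}) hmax x :
  inF0 e Q R B hmax x -> inF e Q R B hmax x.
Proof.
case=> g [Hg [H1 H2]].
split; [split|split; [|split]].
- by move=> k j; rewrite H1 => /and3P[-> -> _].
- by move=> j; rewrite H2 => /andP[].
- move=> k kQ gam [/andP[kg ncut] _].
  case: (boolP [exists j in gam, x.1 k j]).
    case/existsP=> j /andP[jg xj]; rewrite (bigD1 j) //= xj; exact: leq_addr.
  rewrite negb_exists => /forallP Hn; exfalso; move/negP: ncut; apply.
  have hp := Hg k kQ; case/and4P: hp => pa /eqP pl pu _.
  apply/connectP; exists (g k) => //.
  apply: path_restr => //=.
  apply/allP => -[j|] //= jin; apply/negP => jg.
  have := Hn j; rewrite jg H1 /xk kQ jin andbT /=.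
  case: eqP => [ejk|] //; by rewrite -ejk jg in kg.
- move=> j jR k kQ; rewrite H1 H2; case xk0: (xk Q g k j) => //.
  rewrite /xj jR /= lt0b; apply/existsP; exists k; by rewrite kQ xk0.
- move=> k kQ.
  rewrite (eq_bigr (fun j => (xk Q g k j : nat))); last by move=> j _; rewrite H1.
  rewrite sum_bool_card; last by move=> j /and3P[].
  have hp := Hg k kQ; have := none_in hp.
  case/and4P: hp => _ _ pu ps nin.
  rewrite -ltnS; apply: leq_trans ps; apply: card_le; first exact: uniq_NS.
  move=> o; rewrite inE => /orP[/eqP -> //|/mapP[j]].
  by rewrite mem_enum inE => /and3P[_ _ ?] ->.
Qed.

Lemma min_cut_sub (V : finType) (e : rel V) (B : {set V}) k gam :
  is_node_cut e B k gam -> exists2 g' : {set V}, g' \subset gam & is_min_node_cut e B k g'.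
Proof.
move=> H.
have [A /minsetP [/andP[cA sA] mA]] :=
  @ex_minset _ (fun A => is_node_cut e B k A && (A \subset gam))
     (ex_intro _ gam (introT andP (conj H (subxx gam)))).
exists A => //; rewrite /is_min_node_cut; split; first done.
move=> g' pg; apply/negP => cg.
have sg := proper_sub pg.
have eq := mA g' (introT andP (conj cg (subset_trans sg sA))) sg.
by rewrite eq properE subxx in pg.
Qed.

Lemma F_path (V : finType) (e : rel V) (Q R B : {set V}) hmax y k :
  inF e Q R B hmax y -> k \in Q ->
  exists p, in_P' e B hmax k p && all (oapp (y.1 k) true) p.
Proof.
case => [[S1 S2] [Hcut [_ Hh]]] kQ.
pose A := [set j | y.1 k j].
pose gam := ~: (k |: A).
have kA : k \notin A by rewrite inE; apply/negP => /S1 /andP[_]; rewrite eqxx.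
have conn : connect [rel a b | [&& aug_edge e B a b, oapp (fun u => u \notin gam) true a
                                       & oapp (fun u => u \notin gam) true b]]
       (Some k) None.
  apply/contraT => nc.
  have cut : is_node_cut e B k gam by rewrite /is_node_cut !inE eqxx /= nc.
  case: (min_cut_sub cut) => g' sg mc.
  have := Hcut k kQ g' mc; rewrite big1 //.
  move=> j jg; have := subsetP sg j jg; rewrite !inE negb_or => /andP[_].
  by move/negbTE => ->.
case/connectP: conn => p pp; move=> pl; move: pl.
case: (shortenP pp) => p' pp' pu' _ pl.
exists p'.
have al : all (fun o => oapp (fun u => u \notin gam) true o) p'.
  by apply: (path_all_r _ pp') => a b /and3P[].
have kp : Some k \notin p' by case/andP: pu'.
have alA : all (oapp (y.1 k) true) p'.
  apply/allP => -[j|] // jin /=; have := allP al _ jin; rewrite /= !inE negbK.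
  case/orP => [/eqP ejk|//]; by rewrite -ejk jin in kp.
rewrite alA andbT /in_P' -pl eqxx pu' /=.
rewrite (sub_path _ pp'); last by move=> a b /and3P[].
have hA : (#|A| <= hmax)%N.
  rewrite -(sum_bool_card (P := fun j => j != k) (b := y.1 k)); first exact: Hh.
  by move=> j /S1 /andP[].
have := uniq_leq_size (s2 := None :: map Some (enum A)) (proj2 (andP pu')).
rewrite /= size_map -cardE => H; apply: leq_trans (H _) _ => //.
move=> [j|] jin; rewrite inE //; apply/orP; right; apply/mapP; exists j => //.
by rewrite mem_enum inE; exact: (allP alA _ jin).
Qed.

Lemma F_F0 (V : finType) (e : rel V) (Q R B : {set V}) (RR : realFieldType)
  (c_s c_r : RR) hmax y :
  (0 <= c_s)%R -> (0 <= c_r)%R ->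
  inF e Q R B hmax y -> exists x, inF0 e Q R B hmax x /\
     (cost R B c_s c_r x <= cost R B c_s c_r y)%R.
Proof.
move=> cs cr Fy.
have H : forall k, exists p, (k \in Q) ==> (in_P' e B hmax k p && all (oapp (y.1 k) true) p).
  move=> k; case: (boolP (k \in Q)) => kQ; last by exists [::].
  by have [p hp] := F_path Fy kQ; exists p.
pose g k := xchoose (H k).
have Hg k : k \in Q -> in_P' e B hmax k (g k) && all (oapp (y.1 k) true) (g k).
  by move=> kQ; exact: (implyP (xchooseP (H k)) kQ).
exists (xk Q g, xj Q R B g); split.
  exists g; split; last by [].
  by move=> k /Hg /andP[].
case: Fy => [[S1 S2] [_ [Hle _]]].
rewrite /cost; apply: ler_sum => j jR /=; apply: ler_wpM2l.
  by rewrite /cost_of; case: (j \in B).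
rewrite ler_nat /xj jR /=; case: existsP => // -[k /andP[kQ]].
case/and3P=> _ _ jin; have := Hle j jR k kQ.
have := allP (proj2 (andP (Hg k kQ))) _ jin; rewrite /= => -> //.
Qed.

Theorem theorem4 (V : finType) (e : rel V) (Q R B : {set V})
  (RR : realFieldType) (c_s c_r : RR) (hmax : nat) :
  symmetric e -> irreflexive e ->
  [disjoint Q & R] -> [disjoint Q & B] -> [disjoint R & B] ->
  Q :|: R :|: B = [set: V] ->
  (0 < hmax)%N -> (0 <= c_s)%R -> (0 <= c_r)%R ->
  ((exists y, inF e Q R B hmax y) <-> (exists x, inF0 e Q R B hmax x)) /\
  (forall v : RR,
     is_min (inF e Q R B hmax) (cost R B c_s c_r) v <->
     is_min (inF0 e Q R B hmax) (cost R B c_s c_r) v).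
Proof.
move=> _ _ _ _ _ _ _ cs cr; split.
  split=> -[y Hy].
    by have [x [Hx _]] := F_F0 cs cr Hy; exists x.
  by exists y; apply: F0_F.
move=> v; split=> -[[y [Hy cy]] Hlb].
  have [x [Hx cx]] := F_F0 cs cr Hy.
  split; last by move=> z /F0_F; apply: Hlb.
  exists x; split => //; apply/eqP; rewrite eq_le; apply/andP; split.
    by rewrite -cy.
  exact: Hlb (F0_F Hx).
split; first by exists y; split => //; apply: F0_F.
move=> z Hz; have [x [Hx cx]] := F_F0 cs cr Hz.
exact: le_trans (Hlb _ Hx) cx.
Qed.
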